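(* Let $(X,d)$ be a Hadamard space and let $S,T:\ell^\infty(\mathbb Z^s,X)\to\ell^\infty(\mathbb Z^s,X)$ be maps. Suppose: (i) there are a function $D:\ell^\infty(\mathbb Z^s,X)\to\mathbb R_{\ge0}$, a real $0\le\gamma<1$ and a positive integer $n_0$ with $D(S^nx)\le\gamma^{\lfloor n/n_0\rfloor}D(x)$ for all $x\in\ell^\infty(\mathbb Z^s,X)$ and $n\in\mathbb N$; (ii) $T$ is convergent and $d_\infty(Tx,Ty)\le d_\infty(x,y)$ for all $x,y\in\ell^\infty(\mathbb Z^s,X)$; (iii) there is $C\ge0$ with $d_\infty(Sx,Tx)\le C\,D(x)$ for all $x\in\ell^\infty(\mathbb Z^s,X)$. Then $S$ is convergent.
   Context: Hadamard space: complete metric space $(X,d)$ such that for any $x_0,x_1\in X$ there is $y$ with $d(z,y)^2\le\frac12d(z,x_0)^2+\frac12d(z,x_1)^2-\frac14d(x_0,x_1)^2$ for all $z$. $d_\infty(x,y)=\sup_{j\in\mathbb Z^s}d(x_j,y_j)$. A map $S:\ell^\infty(\mathbb Z^s,X)\to\ell^\infty(\mathbb Z^s,X)$ is convergent if for every $x$ there is a continuous $S^\infty x:\mathbb R^s\to X$ with $\sup_{j}d(S^\infty x(j/2^n),(S^nx)_j)\to0$ as $n\to\infty$. *)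

(* Defs.v *)
From Stdlib Require Import Reals Lra ZArith Classical ClassicalEpsilon.
From Stdlib Require Fin.
Open Scope R_scope.

Definition is_metric {X : Type} (d : X -> X -> R) : Prop :=
  (forall x y, 0 <= d x y) /\
  (forall x y, d x y = 0 <-> x = y) /\
  (forall x y, d x y = d y x) /\
  (forall x y z, d x z <= d x y + d y z).

Definition is_complete {X : Type} (d : X -> X -> R) : Prop :=
  forall u : nat -> X,
    (forall eps, eps > 0 -> exists N, forall m n, (m >= N)%nat -> (n >= N)%nat ->
        d (u m) (u n) < eps) ->
    exists l, forall eps, eps > 0 -> exists N, forall n, (n >= N)%nat -> d (u n) l < eps.

(** Hadamard space: complete metric space with the midpoint (CAT(0)) inequality. *)
Definition is_hadamard {X : Type} (d : X -> X -> R) : Prop :=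
  is_metric d /\ is_complete d /\
  forall x0 x1 : X, exists y : X, forall z : X,
    (d z y)^2 <= /2 * (d z x0)^2 + /2 * (d z x1)^2 - /4 * (d x0 x1)^2.

Definition Zs (s : nat) : Type := Fin.t s -> Z.
Definition Rs (s : nat) : Type := Fin.t s -> R.

Definition bounded_seq {X : Type} (d : X -> X -> R) {s : nat} (x : Zs s -> X) : Prop :=
  exists M : R, forall j k : Zs s, d (x j) (x k) <= M.

Definition ell (s : nat) {X : Type} (d : X -> X -> R) : Type :=
  { x : Zs s -> X | bounded_seq d x }.

Definition ev {s : nat} {X : Type} {d : X -> X -> R} (x : ell s d) (j : Zs s) : X :=
  proj1_sig x j.

(** Least upper bound of a set of reals (its value when the lub exists, which is
    always the case for the sets below); defined via classical choice. *)
Definition sup_R (E : R -> Prop) : R := epsilon (inhabits 0) (fun r => is_lub E r).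

Definition d_inf {s : nat} {X : Type} {d : X -> X -> R} (x y : ell s d) : R :=
  sup_R (fun r => exists j : Zs s, r = d (ev x j) (ev y j)).

Definition iterate {A : Type} (S : A -> A) (n : nat) : A -> A :=
  fun a => Nat.iter n S a.

Definition continuous_Rs {s : nat} {X : Type} (d : X -> X -> R) (f : Rs s -> X) : Prop :=
  forall t : Rs s, forall eps, eps > 0 -> exists delta, delta > 0 /\
    forall u : Rs s, (forall i, Rabs (u i - t i) < delta) -> d (f u) (f t) < eps.

Definition grid {s : nat} (n : nat) (j : Zs s) : Rs s := fun i => IZR (j i) / 2 ^ n.

Definition convergent {s : nat} {X : Type} {d : X -> X -> R} (S : ell s d -> ell s d) : Prop :=
  forall x : ell s d, exists f : Rs s -> X,
    continuous_Rs d f /\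
    forall eps, eps > 0 -> exists N : nat, forall n : nat, (n >= N)%nat ->
      forall j : Zs s, d (f (grid n j)) (ev (iterate S n x) j) <= eps.

(* Main.v *)
Require Import Defs.
From Stdlib Require Import Reals Lra Lia ZArith Classical ClassicalEpsilon Arith FunctionalExtensionality.
Open Scope R_scope.


Lemma dinf_lub (s : nat) (X : Type) (d : X -> X -> R) (Hm : is_metric d) (x y : ell s d) :
  is_lub (fun r => exists j : Zs s, r = d (ev x j) (ev y j)) (d_inf x y).
Proof.
  unfold d_inf, sup_R. apply epsilon_spec.
  destruct Hm as [Hp [Hs [Hsym Ht]]].
  destruct x as [x [Mx HMx]]; destruct y as [y [My HMy]]. unfold ev; simpl.
  set (j0 := (fun _ : Fin.t s => 0%Z) : Zs s).
  destruct (completeness (fun r => exists j : Zs s, r = d (x j) (y j))) as [m Hm].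
  - exists (Mx + d (x j0) (y j0) + My). intros r [j ->].
    pose proof (Ht (x j) (x j0) (y j)). pose proof (Ht (x j0) (y j0) (y j)).
    pose proof (HMx j j0). pose proof (HMy j0 j). lra.
  - exists (d (x j0) (y j0)). exists j0. reflexivity.
  - exists m; exact Hm.
Qed.

Lemma dinf_ge (s : nat) (X : Type) (d : X -> X -> R) (Hm : is_metric d) (x y : ell s d) j :
  d (ev x j) (ev y j) <= d_inf x y.
Proof. destruct (dinf_lub s X d Hm x y) as [H _]. apply H. exists j; reflexivity. Qed.

Lemma dinf_le (s : nat) (X : Type) (d : X -> X -> R) (Hm : is_metric d) (x y : ell s d) B :
  (forall j, d (ev x j) (ev y j) <= B) -> d_inf x y <= B.
Proof. intros H. destruct (dinf_lub s X d Hm x y) as [_ H2]. apply H2. intros r [j ->]. apply H. Qed.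

Lemma dinf_tri (s : nat) (X : Type) (d : X -> X -> R) (Hm : is_metric d) (x y z : ell s d) :
  d_inf x z <= d_inf x y + d_inf y z.
Proof.
  apply dinf_le; auto. intros j. destruct Hm as [Hp [Hs [Hsym Ht]]].
  pose proof (Ht (ev x j) (ev y j) (ev z j)).
  pose proof (dinf_ge s X d (conj Hp (conj Hs (conj Hsym Ht))) x y j).
  pose proof (dinf_ge s X d (conj Hp (conj Hs (conj Hsym Ht))) y z j). lra.
Qed.
Fixpoint sumR (f : nat -> R) (k : nat) : R :=
  match k with O => 0 | S k => sumR f k + f k end.

Lemma sumR_le f g k : (forall i, (i < k)%nat -> f i <= g i) -> sumR f k <= sumR g k.
Proof. induction k; simpl; intros H. lra. pose proof (H k ltac:(lia)). assert (sumR f k <= sumR g k) by (apply IHk; intros; apply H; lia). lra. Qed.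

Lemma sumR_ext f g k : (forall i, (i < k)%nat -> f i = g i) -> sumR f k = sumR g k.
Proof. induction k; simpl; intros H. lra. rewrite (H k ltac:(lia)), IHk; auto. Qed.

Lemma sumR_mono f k k' : (forall i, 0 <= f i) -> (k <= k')%nat -> sumR f k <= sumR f k'.
Proof. intros Hf Hk. induction Hk. lra. simpl. pose proof (Hf m). lra. Qed.

Lemma sumR_scal c f k : sumR (fun i => c * f i) k = c * sumR f k.
Proof. induction k; simpl. ring. rewrite IHk. ring. Qed.

Lemma sumR_const c k : sumR (fun _ => c) k = INR k * c.
Proof. induction k; simpl sumR. simpl; ring. rewrite IHk, S_INR. ring. Qed.

Lemma sumR_add f a b : sumR f (a + b) = sumR f a + sumR (fun r => f (a + r)%nat) b.
Proof. induction b; simpl. rewrite Nat.add_0_r; ring. rewrite Nat.add_succ_r; simpl. rewrite IHb; ring. Qed.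

Lemma geom g q : sumR (pow g) q * (1 - g) = 1 - g ^ q.
Proof. induction q; simpl sumR. simpl; ring. simpl pow. rewrite Rmult_plus_distr_r, IHq. ring. Qed.

Lemma pow_le_anti g a b : 0 <= g <= 1 -> (b <= a)%nat -> g ^ a <= g ^ b.
Proof.
  intros Hg Hab. replace a with (b + (a - b))%nat by lia. rewrite pow_add.
  assert (0 <= g ^ b) by (apply pow_le; lra).
  assert (g ^ (a - b) <= 1). { replace 1 with (1 ^ (a - b)) by apply pow1. apply pow_incr; lra. }
  nra.
Qed.

Lemma group_sum g n0 q : (0 < n0)%nat ->
  sumR (fun i => g ^ (i / n0)) (q * n0) = INR n0 * sumR (pow g) q.
Proof.
  intros Hn. induction q. simpl; ring.
  replace (S q * n0)%nat with (q * n0 + n0)%nat by lia. rewrite sumR_add, IHq.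
  rewrite (sumR_ext (fun r => g ^ ((q * n0 + r) / n0)) (fun _ => g ^ q) n0). rewrite sumR_const. change (sumR (pow g) (S q)) with (sumR (pow g) q + g ^ q). ring.
  intros i Hi. f_equal. replace (q * n0 + i)%nat with (i + q * n0)%nat by lia.
  rewrite Nat.div_add by lia. rewrite Nat.div_small by lia. lia.
Qed.

Lemma div_super i m n0 : (0 < n0)%nat -> (i / n0 + m / n0 <= (i + m) / n0)%nat.
Proof.
  intros Hn. pose proof (Nat.div_mod_eq i n0) as E.
  replace (i + m)%nat with ((i mod n0 + m) + (i / n0) * n0)%nat by lia.
  rewrite Nat.div_add by lia. pose proof (Nat.Div0.div_le_mono m (i mod n0 + m) n0 ltac:(lia)). lia.
Qed.

Lemma tail_bound g n0 m k : 0 <= g < 1 -> (0 < n0)%nat ->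
  sumR (fun i => g ^ ((i + m) / n0)) k <= g ^ (m / n0) * (INR n0 / (1 - g)).
Proof.
  intros Hg Hn.
  apply Rle_trans with (sumR (fun i => g ^ (m / n0) * g ^ (i / n0)) k).
  { apply sumR_le. intros i _. rewrite <- pow_add. apply pow_le_anti. lra.
    pose proof (div_super i m n0 Hn). lia. }
  rewrite sumR_scal. apply Rmult_le_compat_l. apply pow_le; lra.
  apply Rle_trans with (sumR (fun i => g ^ (i / n0)) (k * n0)).
  { apply sumR_mono. intros; apply pow_le; lra. nia. }
  rewrite group_sum by auto. unfold Rdiv. apply Rmult_le_compat_l. apply pos_INR.
  pose proof (geom g k). assert (0 <= g ^ k) by (apply pow_le; lra).
  assert (0 < 1 - g) by lra.
  apply Rmult_le_reg_r with (1 - g). lra. rewrite H. rewrite Rinv_l by lra. lra.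
Qed.

Lemma grid_approx (s : nat) (t : Rs s) delta N : delta > 0 ->
  exists n, (n >= N)%nat /\ exists j : Zs s, forall i, Rabs (grid n j i - t i) < delta.
Proof.
  intros Hd. destruct (pow_lt_1_zero (/2) ltac:(rewrite Rabs_pos_eq; lra) delta Hd) as [N1 HN1].
  exists (Nat.max N N1). split. lia.
  set (n := Nat.max N N1).
  assert (Hp : 0 < 2 ^ n) by (apply pow_lt; lra).
  assert (Hq : / 2 ^ n < delta).
  { specialize (HN1 n ltac:(lia)). rewrite <- pow_inv. rewrite Rabs_pos_eq in HN1. lra.
    apply pow_le; lra. }
  exists (fun i => (up (t i * 2 ^ n) - 1)%Z). intros i. unfold grid.
  destruct (archimed (t i * 2 ^ n)) as [H1 H2]. rewrite minus_IZR.
  set (u := IZR (up (t i * 2 ^ n))) in *.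
  replace ((u - 1) / 2 ^ n - t i) with ((u - 1 - t i * 2 ^ n) * / 2 ^ n) by (field; lra).
  rewrite Rabs_mult, (Rabs_pos_eq (/ 2 ^ n)) by (left; apply Rinv_0_lt_compat; lra).
  assert (Rabs (u - 1 - t i * 2 ^ n) <= 1) by (apply Rabs_le; lra).
  assert (0 < / 2 ^ n) by (apply Rinv_0_lt_compat; lra).
  assert (Rabs (u - 1 - t i * 2 ^ n) * / 2 ^ n <= / 2 ^ n) by nra. lra.
Qed.

Lemma density (s : nat) (X : Type) (d : X -> X -> R) (Hm : is_metric d)
  (f g : Rs s -> X) B N : continuous_Rs d f -> continuous_Rs d g ->
  (forall n, (n >= N)%nat -> forall j, d (f (grid n j)) (g (grid n j)) <= B) ->
  forall t, d (f t) (g t) <= B.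
Proof.
  intros Hf Hg H t. destruct Hm as [Hp [Hs [Hsym Ht]]].
  apply le_epsilon. intros e He.
  destruct (Hf t (e/2) ltac:(lra)) as [d1 [Hd1 H1]].
  destruct (Hg t (e/2) ltac:(lra)) as [d2 [Hd2 H2]].
  destruct (grid_approx s t (Rmin d1 d2) N) as [n [Hn [j Hj]]].
  { apply Rmin_glb_lt; lra. }
  assert (A1 : d (f (grid n j)) (f t) < e/2).
  { apply H1. intros i. specialize (Hj i). pose proof (Rmin_l d1 d2). lra. }
  assert (A2 : d (g (grid n j)) (g t) < e/2).
  { apply H2. intros i. specialize (Hj i). pose proof (Rmin_r d1 d2). lra. }
  specialize (H n Hn j).
  pose proof (Ht (f t) (f (grid n j)) (g t)).
  pose proof (Ht (f (grid n j)) (g (grid n j)) (g t)).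
  rewrite (Hsym (f t) (f (grid n j))) in *. lra.
Qed.

Theorem mainTheorem4 (s : nat) (X : Type) (d : X -> X -> R) (HX : is_hadamard d)
  (S T : ell s d -> ell s d)
  (D : ell s d -> R) (HD0 : forall x, 0 <= D x)
  (gamma : R) (n0 : nat) (Hg0 : 0 <= gamma) (Hg1 : gamma < 1) (Hn0 : (0 < n0)%nat)
  (HDS : forall (x : ell s d) (n : nat), D (iterate S n x) <= gamma ^ (n / n0) * D x)
  (HTconv : convergent T)
  (HTnonexp : forall x y : ell s d, d_inf (T x) (T y) <= d_inf x y)
  (C : R) (HC0 : 0 <= C)
  (HST : forall x : ell s d, d_inf (S x) (T x) <= C * D x) :
  convergent S.
Proof.
  destruct HX as [Hm [Hc _]].
  pose proof Hm as [Hp [Hs [Hsym Ht]]].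
  set (F := fun y => proj1_sig (constructive_indefinite_description _ (HTconv y))).
  assert (HF : forall y, continuous_Rs d (F y) /\
    forall eps, eps > 0 -> exists N : nat, forall n : nat, (n >= N)%nat ->
      forall j : Zs s, d (F y (grid n j)) (ev (iterate T n y) j) <= eps).
  { intros y. exact (proj2_sig (constructive_indefinite_description _ (HTconv y))). }
  clearbody F.
  intros x.
  assert (K0 : forall k y, d_inf (iterate S k y) (iterate T k y) <=
                  C * sumR (fun i => D (iterate S i y)) k).
  { induction k; intros y.
    - simpl. apply dinf_le; auto. intros j. rewrite (proj2 (Hs _ _) eq_refl). lra.
    - change (iterate S (Datatypes.S k) y) with (S (iterate S k y)).
      change (iterate T (Datatypes.S k) y) with (T (iterate T k y)).
      simpl sumR.
      pose proof (dinf_tri s X d Hm (S (iterate S k y)) (T (iterate S k y)) (T (iterate T k y))).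
      pose proof (HST (iterate S k y)). pose proof (HTnonexp (iterate S k y) (iterate T k y)).
      pose proof (IHk y). lra. }
  set (Bm := fun m => C * D x * (gamma ^ (m / n0) * (INR n0 / (1 - gamma)))).
  assert (K1 : forall k m, d_inf (iterate S (k + m) x) (iterate T k (iterate S m x)) <= Bm m).
  { intros k m. unfold iterate at 1. rewrite Nat.iter_add. fold (iterate S m x).
    eapply Rle_trans. apply K0.
    unfold Bm. rewrite Rmult_assoc. apply Rmult_le_compat_l; auto.
    apply Rle_trans with (sumR (fun i => D x * gamma ^ ((i + m) / n0)) k).
    - apply sumR_le. intros i _. unfold iterate. rewrite <- Nat.iter_add.
      pose proof (HDS x (i + m)%nat). unfold iterate in H. lra.
    - rewrite sumR_scal. apply Rmult_le_compat_l; auto. apply tail_bound; auto; lra. }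
  assert (Bm0 : forall m, 0 <= Bm m).
  { intros m. unfold Bm. apply Rmult_le_pos. apply Rmult_le_pos; auto.
    apply Rmult_le_pos. apply pow_le; lra. unfold Rdiv. apply Rmult_le_pos. apply pos_INR.
    left; apply Rinv_0_lt_compat; lra. }
  assert (Blim : forall e, e > 0 -> exists M, forall m, (m >= M)%nat -> Bm m <= e).
  { intros e He. set (KK := C * D x * (INR n0 / (1 - gamma))).
    assert (KK0 : 0 <= KK).
    { unfold KK. apply Rmult_le_pos. apply Rmult_le_pos; auto. unfold Rdiv. apply Rmult_le_pos. apply pos_INR.
      left; apply Rinv_0_lt_compat; lra. }
    destruct (pow_lt_1_zero gamma ltac:(rewrite Rabs_pos_eq; lra) (e / (KK + 1))) as [Q HQ].
    { apply Rdiv_lt_0_compat; lra. }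
    exists (Q * n0)%nat. intros m Hmm.
    assert (Hq : (m / n0 >= Q)%nat).
    { pose proof (Nat.Div0.div_le_mono _ _ n0 Hmm). rewrite Nat.div_mul in H by lia. lia. }
    specialize (HQ _ Hq). rewrite Rabs_pos_eq in HQ by (apply pow_le; lra).
    assert (E : Bm m = KK * gamma ^ (m / n0)) by (unfold Bm, KK; ring).
    rewrite E.
    assert (KK * gamma ^ (m / n0) <= KK * (e / (KK + 1))) by (apply Rmult_le_compat_l; lra).
    assert (KK * (e / (KK + 1)) <= e).
    { unfold Rdiv. apply Rmult_le_reg_r with (KK + 1). lra.
      rewrite Rmult_assoc, Rmult_assoc, Rinv_l by lra. nra. }
    lra. }
  set (g := fun m (t : Rs s) => F (iterate S m x) (fun i => 2 ^ m * t i)).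
  assert (Gscale : forall k m (j : Zs s), (fun i => 2 ^ m * grid (k + m) j i) = grid k j).
  { intros k m j. apply functional_extensionality. intros i. unfold grid. rewrite pow_add.
    field. split; apply pow_nonzero; lra. }
  assert (G1 : forall m, continuous_Rs d (g m)).
  { intros m t e He. destruct (proj1 (HF (iterate S m x)) (fun i => 2 ^ m * t i) e He) as [dl [Hdl H]].
    assert (Hp2 : 0 < 2 ^ m) by (apply pow_lt; lra).
    exists (dl / 2 ^ m). split. apply Rdiv_lt_0_compat; lra.
    intros u Hu. unfold g. apply H. intros i. specialize (Hu i).
    rewrite <- Rmult_minus_distr_l, Rabs_mult, (Rabs_pos_eq (2 ^ m)) by lra.
    apply Rmult_lt_compat_l with (r := 2 ^ m) in Hu; auto.
    replace (2 ^ m * (dl / 2 ^ m)) with dl in Hu by (field; lra). lra. }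
  assert (G2 : forall m e, e > 0 -> exists N, forall k, (k >= N)%nat -> forall j,
      d (g m (grid (k + m) j)) (ev (iterate T k (iterate S m x)) j) <= e).
  { intros m e He. destruct (proj2 (HF (iterate S m x)) e He) as [N HN].
    exists N. intros k Hk j. unfold g. rewrite Gscale. apply HN; auto. }
  assert (G3 : forall m e, e > 0 -> exists N, forall k, (k >= N)%nat -> forall j,
      d (g m (grid (k + m) j)) (ev (iterate S (k + m) x) j) <= e + Bm m).
  { intros m e He. destruct (G2 m e He) as [N HN]. exists N. intros k Hk j.
    pose proof (HN k Hk j).
    pose proof (dinf_ge s X d Hm (iterate S (k + m) x) (iterate T k (iterate S m x)) j).
    pose proof (K1 k m).
    pose proof (Ht (g m (grid (k + m) j)) (ev (iterate T k (iterate S m x)) j) (ev (iterate S (k + m) x) j)).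
    rewrite (Hsym (ev (iterate T k (iterate S m x)) j)) in H2. lra. }

  assert (Cau : forall e, e > 0 -> exists M, forall m m', (m >= M)%nat -> (m' >= M)%nat ->
     forall t, d (g m t) (g m' t) <= e).
  { intros e He. destruct (Blim (e/4) ltac:(lra)) as [M HM]. exists M. intros m m' Hm1 Hm2.
    destruct (G3 m (e/4) ltac:(lra)) as [N1 HN1]. destruct (G3 m' (e/4) ltac:(lra)) as [N2 HN2].
    apply (density s X d Hm (g m) (g m') e (N1 + N2 + m + m')); auto.
    intros n Hn j.
    specialize (HN1 (n - m)%nat ltac:(lia) j). specialize (HN2 (n - m')%nat ltac:(lia) j).
    rewrite Nat.sub_add in HN1, HN2 by lia.
    specialize (HM m Hm1) as B1. specialize (HM m' Hm2) as B2.
    pose proof (Ht (g m (grid n j)) (ev (iterate S n x) j) (g m' (grid n j))).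
    rewrite (Hsym (ev (iterate S n x) j)) in H. lra. }
  assert (Lim : forall t, exists l, forall eps, eps > 0 -> exists N, forall n, (n >= N)%nat -> d (g n t) l < eps).
  { intros t. apply (Hc (fun m => g m t)). intros e He. destruct (Cau (e/2) ltac:(lra)) as [M HM].
    exists M. intros m n Hm1 Hn1. specialize (HM m n Hm1 Hn1 t). lra. }
  set (f := fun t => epsilon (inhabits (g O t)) (fun l => forall eps, eps > 0 -> exists N, forall n, (n >= N)%nat -> d (g n t) l < eps)).
  assert (Hf : forall t eps, eps > 0 -> exists N, forall n, (n >= N)%nat -> d (g n t) (f t) < eps).
  { intros t. unfold f. apply epsilon_spec. apply Lim. }
  clearbody f.
  assert (Unif : forall e, e > 0 -> exists M, forall m, (m >= M)%nat -> forall t, d (g m t) (f t) <= e).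
  { intros e He. destruct (Cau (e/2) ltac:(lra)) as [M HM]. exists M. intros m Hm1 t.
    destruct (Hf t (e/2) ltac:(lra)) as [N HN].
    specialize (HN (Nat.max m N) ltac:(lia)). specialize (HM m (Nat.max m N) Hm1 ltac:(lia) t).
    pose proof (Ht (g m t) (g (Nat.max m N) t) (f t)). lra. }
  exists f. split.
  - intros t e He. destruct (Unif (e/4) ltac:(lra)) as [M HM].
    destruct (G1 M t (e/4) ltac:(lra)) as [dl [Hdl H]]. exists dl. split; auto.
    intros u Hu. specialize (H u Hu). pose proof (HM M (le_n _) u). pose proof (HM M (le_n _) t).
    pose proof (Ht (f u) (g M u) (f t)). pose proof (Ht (g M u) (g M t) (f t)).
    rewrite (Hsym (f u) (g M u)) in H2. lra.
  - intros e He. destruct (Unif (e/3) ltac:(lra)) as [M1 HM1]. destruct (Blim (e/3) ltac:(lra)) as [M2 HM2].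
    set (m := Nat.max M1 M2). destruct (G2 m (e/3) ltac:(lra)) as [N1 HN1].
    exists (N1 + m)%nat. intros n Hn j.
    specialize (HN1 (n - m)%nat ltac:(lia) j). rewrite Nat.sub_add in HN1 by lia.
    pose proof (K1 (n - m)%nat m) as K. rewrite Nat.sub_add in K by lia.
    pose proof (dinf_ge s X d Hm (iterate S n x) (iterate T (n - m) (iterate S m x)) j) as E.
    specialize (HM1 m ltac:(lia) (grid n j)). specialize (HM2 m ltac:(lia)).
    pose proof (Ht (f (grid n j)) (g m (grid n j)) (ev (iterate S n x) j)).
    pose proof (Ht (g m (grid n j)) (ev (iterate T (n - m) (iterate S m x)) j) (ev (iterate S n x) j)).
    rewrite (Hsym (f (grid n j)) (g m (grid n j))) in H. rewrite (Hsym (ev (iterate T (n - m) (iterate S m x)) j)) in H0.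
    clearbody m. lra.
Qed.
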